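(* Let $(X,d)$ be a separable complete metric space, $(\Omega,\mathsf{F},\mathbb{P})$ a probability space, and $\mathcal{F}$ a sub-$\sigma$-algebra of $\mathsf{F}$. Let $\phi:X\times X\to[0,\infty)$ be a Carath\'eodory distance and let $S\subseteq X$ be a non-empty Borel set. Then for every $\mathcal{F}$-measurable $X$-valued random variable $x$ and every $\varepsilon>0$ there exists an $\mathcal{F}$-measurable $X$-valued random variable $s$ such that $s\in S$ almost surely and $\mathbb{E}[\phi(s,x)]\le\mathbb{E}[\mathrm{dist}^\phi_S(x)]+\varepsilon$.
   Context: A Carath\'eodory distance is a function $\phi:X\times X\to[0,\infty)$ continuous in its left argument and Borel measurable in its right argument. $\mathrm{dist}^\phi_S(x):=\inf_{s\in S}\phi(s,x)$. *)

(* Defs.v *)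
From HB Require Import structures.
From mathcomp Require Import all_boot all_order all_algebra.
From mathcomp Require Import all_classical all_reals all_analysis.
Set Implicit Arguments. Unset Strict Implicit. Unset Printing Implicit Defensive.
Import Order.TTheory GRing.Theory Num.Theory numFieldTopology.Exports numFieldNormedType.Exports.
Local Open Scope classical_set_scope.
Local Open Scope ring_scope.

Definition borel_sets (X : topologicalType) : set (set X) := <<s open >>.

Definition separable_space (X : topologicalType) : Prop :=
  exists D : set X, countable D /\ closure D = setT.

Definition measurable_wrt (Omega : Type) (X : topologicalType)
  (F : set (set Omega)) (f : Omega -> X) : Prop :=
  forall B : set X, borel_sets B -> F (f @^-1` B).

Definition caratheodory_distance (R : realType) (X : topologicalType)
  (phi : X -> X -> R) : Prop :=
  (forall s x, 0 <= phi s x) /\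
  (forall x, continuous (fun s => phi s x)) /\
  (forall s (B : set R), measurable B -> borel_sets ((fun x => phi s x) @^-1` B)).

Definition dist_phi (R : realType) (X : Type) (phi : X -> X -> R) (S : set X)
  (x : X) : \bar R :=
  ereal_inf [set (phi s x)%:E | s in S].

(* Main.v *)
Require Import Defs.
From HB Require Import structures.
From mathcomp Require Import all_boot all_order all_algebra.
From mathcomp Require Import all_classical all_reals all_analysis.
From mathcomp Require Import measurable_realfun.
Import Order.TTheory GRing.Theory Num.Theory numFieldTopology.Exports numFieldNormedType.Exports.
Local Open Scope classical_set_scope.
Local Open Scope ring_scope.

Theorem corollary2p11 (R : realType) (X : completePseudoMetricType R)
  (d : measure_display) (Omega : measurableType d) (P : probability Omega R)
  (F : set (set Omega))
  (hX2 : hausdorff_space X) (hXsep : separable_space X)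
  (hF : sigma_algebra setT F) (hFsub : F `<=` measurable)
  (phi : X -> X -> R) (hphi : caratheodory_distance phi)
  (S : set X) (hS : borel_sets S) (hS0 : S !=set0)
  (x : Omega -> X) (hx : measurable_wrt F x)
  (eps : R) (heps : 0 < eps) :
  exists s : Omega -> X,
    [/\ measurable_wrt F s,
        {ae P, forall w, S (s w)} &
        (\int[P]_w (phi (s w) (x w))%:E
           <= \int[P]_w dist_phi phi S (x w) + eps%:E)%E].
Proof.
case: hphi => phi0 [phic phim].
have [s0 Ss0] := hS0.
have [f fD] : exists f : nat -> X, forall y e, 0 < e -> exists k, ball y e (f k).
  case: hXsep => D [cD clD]; move/countable_injP: cD => [g ginj].
  exists (fun n => xget s0 [set z | D z /\ g z = n]) => y e e0.
  have : closure D y by rewrite clD.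
  move=> /(_ _ (nbhsx_ballx y e e0)) [z [Dz bz]].
  exists (g z).
  have [Dz' gz'] : [set z' | D z' /\ g z' = g z] (xget s0 [set z' | D z' /\ g z' = g z]).
    by apply: xgetPex; exists z.
  by rewrite (ginj _ _ _ _ gz') ?inE.
pose T2 k m := xget s0 (S `&` ball (f k) (m.+1%:R^-1)).
pose T n := match (unpickle n : option (nat * nat)) with Some km => T2 km.1 km.2 | None => s0 end.
have TS n : S (T n).
  rewrite /T; case: unpickle => [[k m]|] //=; rewrite /T2.
  by case: xgetP => // ? _ [].
have Tdense z e : S z -> 0 < e -> exists n, ball z e (T n).
  move=> Sz e0.
  have e20 : 0 < e / 2 by rewrite divr_gt0.
  have [N _ HN] := near_infty_natSinv_lt (PosNum e20).
  have /= hm := HN N (leqnn N).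
  set r := N.+1%:R^-1 in hm.
  have r0 : 0 < r by rewrite /r invr_gt0 ltr0n.
  have [k bk] := fD z r r0.
  have hne : exists t, (S `&` ball (f k) r) t by exists z; split => //; exact: ball_sym.
  have [_ bt] := xgetPex s0 hne.
  exists (pickle (k, N)); rewrite /T pickleK /= /T2 -/r.
  apply: (le_ball (e1 := r + r)); last exact: ball_triangle bk bt.
  by rewrite (splitr e) lerD // ltW.
have key y : dist_phi phi S y = ereal_inf (range (fun n => (phi (T n) y)%:E)).
  apply/eqP; rewrite eq_le; apply/andP; split.
    by apply: le_ereal_inf => _ [n _ <-]; exists (T n).
  apply: le_ereal_inf_tmp => _ [z Sz <-].
  apply/lee_addgt0Pr => del del0.
  have := phic y z _ (nbhsx_ballx (phi z y) del del0).
  move/nbhs_ballP => [e e0 He].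
  have [n bn] := Tdense z e Sz e0.
  apply: ge_ereal_inf; exists (phi (T n) y)%:E; first by exists n.
  have := He _ bn; rewrite /= /ball /=.
  rewrite lee_fin.
  by rewrite ltr_distlC => /andP[_ /ltW].
pose OF := @g_sigma_algebraType Omega F.
have mOF (A : set OF) : measurable A = F A by rewrite measurable_g_measurableTypeE.
pose ph n (w : OF) := phi (T n) (x w).
have mph n : measurable_fun (setT : set OF) (ph n).
  move=> _ Y mY; rewrite setTI mOF; exact: hx _ (phim _ _ mY).
have mEph n : measurable_fun (setT : set OF) (EFin \o ph n).
  exact: (proj2 (measurable_EFinP _ (ph n)) (mph n)).
pose G (w : OF) := ereal_inf (range (fun n => (ph n w)%:E)).
have mG : measurable_fun setT G.
  have -> : G = fun w => einfs (fun n => (ph n w)%:E) 0.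
    apply/funext => w; rewrite /G /einfs /=; congr ereal_inf.
    by apply/seteqP; split => _ [n _ <-]; exists n.
  exact: measurable_fun_einfs.
have GE w : G w = dist_phi phi S (x w) by rewrite key.
have G0 w : (0 <= G w)%E.
  by apply: le_ereal_inf_tmp => _ [n _ <-]; rewrite -[X in (X <= _)%E]/((0:R)%:E) lee_fin; exact: phi0.
pose A n := [set w : OF | ((ph n w)%:E < G w + eps%:E)%E].
have mA n : measurable (A n).
  have := measurable_lte measurableT (mEph n) (emeasurable_funD mG (measurable_cst (eps%:E))).
  by rewrite setTI.
have exA w : exists n, A n w.
  have Gfin : G w \is a fin_num.
    rewrite ge0_fin_numE //; apply: le_lt_trans (ltry (ph 0%N w)).
    by apply: ereal_inf_lbound; exists 0%N.
  by have [_ [n _ <-] lt] := lb_ereal_inf_adherent heps Gfin; exists n.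
pose N w := xget 0%N [set n | A n w /\ forall k, (k < n)%N -> ~ A k w].
have NP w : A (N w) w /\ forall k, (k < N w)%N -> ~ A k w.
  apply: (@xgetPex _ 0%N [set n | A n w /\ forall k, (k < n)%N -> ~ A k w]).
  have exA' : exists n, `[< A n w >] by have [n An] := exA w; exists n; apply/asboolP.
  case: (ex_minnP exA') => m /asboolP Am mmin; exists m; split => // k km Ak.
  by have := mmin k (asboolT Ak); rewrite leqNgt km.
pose E n := A n `&` \bigcap_(k in [set k | (k < n)%N]) ~` A k.
have mE n : measurable (E n).
  apply: measurableI; first exact: mA.
  by apply: bigcap_measurableType => k _; exact: measurableC.
have NE w n : N w = n <-> E n w.
  split => [<-|[An Hn]]; first by case: (NP w) => AN HN; split => // k kn; exact: HN.
  case: (NP w) => AN HN; case: (ltngtP (N w) n) => // h.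
    by case: (Hn _ h).
  by case: (HN _ h).
pose s w := T (N w).
exists s; split.
- move=> B _.
  have -> : s @^-1` B = \bigcup_(n in [set n | B (T n)]) E n.
    apply/seteqP; split => w.
      by move=> Bs; exists (N w) => //; exact/NE.
    by move=> [n Bn /NE Nw]; rewrite /preimage /s /= Nw.
  rewrite -mOF; exact: bigcup_measurable.
- by apply: aeW => w; exact: TS.
have toO (h : Omega -> \bar R) : measurable_fun (setT : set OF) h -> measurable_fun (setT : set Omega) h.
  move=> mh _ Y mY; apply: hFsub; rewrite -mOF; exact: mh measurableT Y mY.
have mL : measurable_fun (setT : set OF) (fun w => (phi (s w) (x w))%:E).
  move=> _ Y mY; rewrite setTI.
  have -> : (fun w => (phi (s w) (x w))%:E) @^-1` Y =
      \bigcup_n (E n `&` ((fun w => (ph n w)%:E) @^-1` Y)).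
    apply/seteqP; split => w.
      by move=> h; exists (N w) => //; split; [exact/NE|exact: h].
    by move=> [n _ [/NE <- h]]; exact: h.
  apply: bigcupT_measurable => n; apply: measurableI; first exact: mE.
  by have := mEph n measurableT Y mY; rewrite setTI.
have -> : (\int[P]_w dist_phi phi S (x w) = \int[P]_w G w)%E.
  by apply: eq_integral => w _; rewrite GE.
rewrite -[eps%:E]mule1 -(probability_setT P) -integral_cst //.
rewrite -ge0_integralD //; first last.
- by move=> ? _; rewrite /= lee_fin ltW.
- exact: toO.
apply: ge0_le_integral => //.
- by move=> w _; rewrite lee_fin.
- exact: toO.
- exact/toO/emeasurable_funD.
- by move=> w _ /=; rewrite ltW //; case: (NP w).
Qed.
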